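(* Let $\mathrm F\colon\mathcal A\rightleftarrows\mathcal B\colon\mathrm U$ be an adjunction (unit $\eta$, counit $\varepsilon$), $\mathbb T=(\mathrm{FU},\mathrm F\eta\mathrm U,\varepsilon)$ the induced comonad on $\mathcal B$, $\mathbb C$ a comonad on $\mathcal A$, and $\mathbb S$ a comonad on $\mathcal B$ lifting $\mathbb C$ through $\mathrm F\dashv\mathrm U$ via a natural isomorphism $\Omega\colon\mathrm{CU}\Rightarrow\mathrm{US}$ such that $(\mathrm U,\Omega)$ is a lax morphism of comonads from $\mathbb C$ to $\mathbb S$; let $\Lambda=\varepsilon\mathrm{SF}\circ\mathrm F\Omega\mathrm F\circ\mathrm{FC}\eta\colon\mathrm{FC}\Rightarrow\mathrm{SF}$ be its mate and $\chi=\Lambda\mathrm U\circ\mathrm F\Omega^{-1}\colon\mathrm{TS}\Rightarrow\mathrm{ST}$ the induced distributive law of $\mathbb T$ over $\mathbb S$. Assume further: $\mathrm V\colon\mathcal C\rightleftarrows\mathcal B\colon\mathrm G$ is an adjunction (unit $\eta'$, counit $\varepsilon'$) with $\mathrm S=\mathrm{VG}$, $\Delta^{\mathbb S}=\mathrm V\eta'\mathrm G$, $\varepsilon^{\mathbb S}=\varepsilon'$; $\mathbb Q$ is a comonad on $\mathcal C$ with a natural isomorphism $\tilde\Omega\colon\mathrm{QG}\Rightarrow\mathrm{GT}$ such that $(\mathrm G,\tilde\Omega)$ is a lax isomorphism of comonads from $\mathbb Q$ to $\mathbb T$; and the mate $\tilde\Lambda=\varepsilon'\mathrm{TV}\circ\mathrm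 V\tilde\Omega\mathrm V\circ\mathrm{VQ}\eta'\colon\mathrm{VQ}\Rightarrow\mathrm{TV}$ is invertible (so $(\mathrm V,\tilde\Lambda)$ is a colax isomorphism of comonads from $\mathbb Q$ to $\mathbb T$). Let $\psi=\tilde\Lambda\mathrm G\circ\mathrm V\tilde\Omega^{-1}\colon\mathrm{ST}\Rightarrow\mathrm{TS}$. If $\chi=\psi^{-1}$, then for every category $\mathcal Z$ and functor $\mathrm N\colon\mathcal B\to\mathcal Z$, the left $\chi$-coalgebra structures on $\mathrm N$ are in bijective correspondence with the $\mathbb Q$-opcoalgebra structures on $\mathrm{NV}$.
   Context: Juxtaposition denotes composition of functors and whiskering; $\circ$ is vertical composition. Comonads $(\mathrm D,\Delta^{\mathbb D},\varepsilon^{\mathbb D})$ are coassociative and counital. A lax morphism of comonads from $\mathbb C'$ (on $\mathcal C'$) to $\mathbb D$ (on $\mathcal D$) is $(\mathrm G,\sigma)$, $\mathrm G\colon\mathcal D\to\mathcal C'$, $\sigma\colon\mathrm C'\mathrm G\Rightarrow\mathrm{GD}$ with $\mathrm G\Delta^{\mathbb D}\circ\sigma=\sigma\mathrm D\circ\mathrm C'\sigma\circ\Delta^{\mathbb C'}\mathrm G$ and $\mathrm G\varepsilon^{\mathbb D}\circ\sigma=\varepsilon^{\mathbb C'}\mathrm G$; a colax morphism is $(\mathrm F,\tau)$, $\mathrm F\colon\mathcal C'\to\mathcal D$, $\tau\colon\mathrm F\mathrm C'\Rightarrow\mathrm{DF}$ with $\Delta^{\mathbb D}\mathrm F\circ\tau=\mathrm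 D\tau\circ\tau\mathrm C'\circ\mathrm F\Delta^{\mathbb C'}$ and $\varepsilon^{\mathbb D}\mathrm F\circ\tau=\mathrm F\varepsilon^{\mathbb C'}$; ''isomorphism'' means the transformation is invertible. A left $\chi$-coalgebra structure on $\mathrm N\colon\mathcal B\to\mathcal Z$ (for $\chi\colon\mathrm{TS}\Rightarrow\mathrm{ST}$) is $\lambda\colon\mathrm{NS}\Rightarrow\mathrm{NT}$ with $\mathrm N\Delta^{\mathbb T}\circ\lambda=\lambda\mathrm T\circ\mathrm N\chi\circ\lambda\mathrm S\circ\mathrm N\Delta^{\mathbb S}$ and $\mathrm N\varepsilon^{\mathbb T}\circ\lambda=\mathrm N\varepsilon^{\mathbb S}$. A $\mathbb Q$-opcoalgebra structure on $\mathrm P\colon\mathcal C\to\mathcal Z$ is $\nabla\colon\mathrm P\Rightarrow\mathrm{PQ}$ with $\mathrm P\Delta^{\mathbb Q}\circ\nabla=\nabla\mathrm Q\circ\nabla$ and $\mathrm P\varepsilon^{\mathbb Q}\circ\nabla=\mathrm{id}_{\mathrm P}$. *)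

(* Defs.v *)
Set Implicit Arguments.
Unset Strict Implicit.

Record Category := {
  ob :> Type;
  hom : ob -> ob -> Type;
  cmp : forall a b c : ob, hom b c -> hom a b -> hom a c;
  idn : forall a : ob, hom a a;
  cmp_idl : forall a b (f : hom a b), cmp (idn b) f = f;
  cmp_idr : forall a b (f : hom a b), cmp f (idn a) = f;
  cmp_assoc : forall a b c d (h : hom c d) (g : hom b c) (f : hom a b),
      cmp h (cmp g f) = cmp (cmp h g) f }.
Arguments hom {_} a b.
Arguments cmp {_ a b c} g f.
Arguments idn {_} a.
Notation "g ∘ f" := (cmp g f) (at level 40, left associativity).

Record Functor (A B : Category) := {
  fobj :> A -> B;
  fmap : forall a b : A, hom a b -> hom (fobj a) (fobj b);
  fmap_id : forall a, fmap (idn a) = idn (fobj a);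
  fmap_cmp : forall a b c (g : hom b c) (f : hom a b),
      fmap (g ∘ f) = fmap g ∘ fmap f }.
Arguments fmap {A B} f {a b} _ : rename.

Definition idF (A : Category) : Functor A A :=
  {| fobj := fun a => a; fmap := fun a b f => f;
     fmap_id := fun a => eq_refl; fmap_cmp := fun _ _ _ _ _ => eq_refl |}.

Definition fcomp (A B C : Category) (G : Functor B C) (F : Functor A B)
  : Functor A C.
Proof.
  refine {| fobj := fun a => G (F a);
            fmap := fun a b f => fmap G (fmap F f) |}.
  - intros a. rewrite !fmap_id. reflexivity.
  - intros a b c g f. rewrite !fmap_cmp. reflexivity.
Defined.

Record NatTrans (A B : Category) (F G : Functor A B) := {
  tr :> forall a : A, hom (F a) (G a);
  natural : forall a b (f : hom a b), tr b ∘ fmap F f = fmap G f ∘ tr a }.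

Record Adjunction (A B : Category) (F : Functor A B) (U : Functor B A) := {
  adj_unit : NatTrans (idF A) (fcomp U F);
  adj_counit : NatTrans (fcomp F U) (idF B);
  tri_l : forall a : A, adj_counit (F a) ∘ fmap F (adj_unit a) = idn (F a);
  tri_r : forall b : B, fmap U (adj_counit b) ∘ adj_unit (U b) = idn (U b) }.

Record ComonadData (A : Category) := {
  cfun :> Functor A A;
  cdelta : NatTrans cfun (fcomp cfun cfun);
  ceps : NatTrans cfun (idF A) }.

Definition is_comonad (A : Category) (D : ComonadData A) : Prop :=
  (forall a : A, fmap D (cdelta D a) ∘ cdelta D a = cdelta D (D a) ∘ cdelta D a)
  /\ (forall a : A, ceps D (D a) ∘ cdelta D a = idn (D a))
  /\ (forall a : A, fmap D (ceps D a) ∘ cdelta D a = idn (D a)).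

Definition induced_delta (A B : Category) (F : Functor A B) (U : Functor B A)
  (adj : Adjunction F U) : NatTrans (fcomp F U) (fcomp (fcomp F U) (fcomp F U)).
Proof.
  refine {| tr := ((fun b => fmap F (adj_unit adj (U b)))
      : forall b, hom (fcomp F U b) (fcomp (fcomp F U) (fcomp F U) b)) |}.
  intros a b f. simpl. rewrite <- !fmap_cmp. f_equal.
  exact (natural (adj_unit adj) (fmap U f)).
Defined.

Definition induced_comonad (A B : Category) (F : Functor A B) (U : Functor B A)
  (adj : Adjunction F U) : ComonadData B :=
  {| cfun := fcomp F U; cdelta := induced_delta adj; ceps := adj_counit adj |}.

Definition lax_morphism (C' D' : Category) (Cm : ComonadData C') (Dm : ComonadData D')
  (G : Functor D' C') (sigma : NatTrans (fcomp Cm G) (fcomp G Dm)) : Prop :=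
  (forall d : D',
     fmap G (cdelta Dm d) ∘ sigma d
     = sigma (Dm d) ∘ fmap Cm (sigma d) ∘ cdelta Cm (G d))
  /\ (forall d : D', fmap G (ceps Dm d) ∘ sigma d = ceps Cm (G d)).

Definition mateL (A B : Category) (F : Functor A B) (U : Functor B A)
  (adj : Adjunction F U) (Cm : ComonadData A) (S : ComonadData B)
  (Om : NatTrans (fcomp Cm U) (fcomp U S)) (a : A) : hom (F (Cm a)) (S (F a)) :=
  adj_counit adj (S (F a)) ∘ fmap F (Om (F a)) ∘ fmap F (fmap Cm (adj_unit adj a)).

Definition distr_law (A B : Category) (F : Functor A B) (U : Functor B A)
  (adj : Adjunction F U) (Cm : ComonadData A) (S : ComonadData B)
  (Om : NatTrans (fcomp Cm U) (fcomp U S))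
  (Ominv : forall b : B, hom (U (S b)) (Cm (U b))) (b : B)
  : hom (F (U (S b))) (S (F (U b))) :=
  mateL adj Om (U b) ∘ fmap F (Ominv b).

Definition left_coalg (B Z : Category) (S T : ComonadData B)
  (chi : forall b : B, hom (T (S b)) (S (T b))) (N : Functor B Z)
  (lam : NatTrans (fcomp N S) (fcomp N T)) : Prop :=
  (forall b : B,
     fmap N (cdelta T b) ∘ lam b
     = lam (T b) ∘ fmap N (chi b) ∘ lam (S b) ∘ fmap N (cdelta S b))
  /\ (forall b : B, fmap N (ceps T b) ∘ lam b = fmap N (ceps S b)).

Definition opcoalg (C Z : Category) (Q : ComonadData C) (P : Functor C Z)
  (nab : NatTrans P (fcomp P Q)) : Prop :=
  (forall c : C, fmap P (cdelta Q c) ∘ nab c = nab (Q c) ∘ nab c)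
  /\ (forall c : C, fmap P (ceps Q c) ∘ nab c = idn (P c)).
Arguments lax_morphism {C' D'} Cm Dm G sigma.
Arguments left_coalg {B Z} S T chi {N} lam.

(* Main.v *)
Require Import Defs.
From Stdlib Require Import FunctionalExtensionality ProofIrrelevance.

Ltac ext L r := lazymatch L with
  | ?x ∘ ?y => let y' := ext y r in constr:(x ∘ y')
  | _ => constr:(L ∘ r) end.

Ltac rnorm := simpl; repeat (rewrite ?fmap_cmp, ?fmap_id, ?cmp_idl, ?cmp_idr); repeat rewrite <- cmp_assoc.
Ltac rnormH H := simpl in H; repeat (rewrite ?fmap_cmp, ?fmap_id, ?cmp_idl, ?cmp_idr in H); repeat rewrite <- cmp_assoc in H.

Ltac rw0 H :=
  let H1 := fresh "H1" in pose proof H as H1; rnormH H1;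
  rnorm;
  first [
    lazymatch type of H1 with @eq (@hom ?C ?a ?b) ?L ?R =>
      let H2 := fresh "H2" in
      assert (H2 : forall (d : ob C) (r : @hom C d a),
                 ltac:(let l := ext L r in let rr := ext R r in exact (l = rr)))
        by (let d := fresh in let r := fresh in intros d r;
            repeat rewrite cmp_assoc; repeat rewrite cmp_assoc in H1; exact (f_equal (fun t => t ∘ r) H1));
      simpl in H2; rewrite H2; clear H2
    end
  | rewrite H1 ]; clear H1; rnorm.

Ltac rw H := rw0 H.
Ltac rwr H := rw0 (eq_sym H).

Ltac liftH F H := apply (f_equal (fun t => fmap F t)) in H; rnormH H.

Ltac rwn X h := let H := fresh "Hn" in pose proof (natural X h) as H; simpl in H; rw H; clear H.
Ltac rwn1 F X h := let H := fresh "Hn" in pose proof (natural X h) as H; simpl in H; liftH F H; rw H; clear H.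
Ltac rwn2 F1 F2 X h := let H := fresh "Hn" in pose proof (natural X h) as H; simpl in H; liftH F2 H; liftH F1 H; rw H; clear H.
Ltac rwn3 F1 F2 F3 X h := let H := fresh "Hn" in pose proof (natural X h) as H; simpl in H; liftH F3 H; liftH F2 H; liftH F1 H; rw H; clear H.
Ltac rwnr X h := let H := fresh "Hn" in pose proof (natural X h) as H; simpl in H; rwr H; clear H.
Ltac rwnr1 F X h := let H := fresh "Hn" in pose proof (natural X h) as H; simpl in H; liftH F H; rwr H; clear H.
Ltac rwnr2 F1 F2 X h := let H := fresh "Hn" in pose proof (natural X h) as H; simpl in H; liftH F2 H; liftH F1 H; rwr H; clear H.

Lemma cancel_l {C : Category} {a b c : C} (i : hom b c) (j : hom c b) {f g : hom a b} :
  j ∘ i = idn b -> i ∘ f = i ∘ g -> f = g.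
Proof. intros H1 H2. rewrite <- (cmp_idl f), <- (cmp_idl g), <- H1, <- !cmp_assoc, H2. reflexivity. Qed.

Lemma cancel_r {C : Category} {a b c : C} (i : hom a b) (j : hom b a) {f g : hom b c} :
  i ∘ j = idn b -> f ∘ i = g ∘ i -> f = g.
Proof. intros H1 H2. rewrite <- (cmp_idr f), <- (cmp_idr g), <- H1, !cmp_assoc, H2. reflexivity. Qed.

Lemma sig_nat_eq (A B : Category) (F G : Functor A B) (P : NatTrans F G -> Prop)
  (x y : {a : NatTrans F G | P a}) :
  (forall a, proj1_sig x a = proj1_sig y a) -> x = y.
Proof.
  destruct x as [[al na] p], y as [[be nb] q]; simpl; intros H.
  assert (al = be) by (apply functional_extensionality_dep; exact H). subst be.
  assert (na = nb) by apply proof_irrelevance. subst nb.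
  f_equal. apply proof_irrelevance.
Qed.
Theorem corollary3p2
  (A B Cc : Category)
  (F : Functor A B) (U : Functor B A) (adjFU : Adjunction F U)
  (Cm : ComonadData A) (HCm : is_comonad Cm)
  (V : Functor Cc B) (G : Functor B Cc) (adjVG : Adjunction V G)
  (* S := (VG, V eta' G, eps'), T := (FU, F eta U, eps) *)
  (Om : NatTrans (fcomp Cm U) (fcomp U (induced_comonad adjVG)))
  (Ominv : forall b : B, hom (U (induced_comonad adjVG b)) (Cm (U b)))
  (HOm1 : forall b : B, Ominv b ∘ Om b = idn (Cm (U b)))
  (HOm2 : forall b : B, Om b ∘ Ominv b = idn (U (induced_comonad adjVG b)))
  (HOmlax : lax_morphism Cm (induced_comonad adjVG) U Om)
  (Q : ComonadData Cc) (HQ : is_comonad Q)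
  (Omt : NatTrans (fcomp Q G) (fcomp G (induced_comonad adjFU)))
  (Omtinv : forall b : B, hom (G (induced_comonad adjFU b)) (Q (G b)))
  (HOmt1 : forall b : B, Omtinv b ∘ Omt b = idn (Q (G b)))
  (HOmt2 : forall b : B, Omt b ∘ Omtinv b = idn (G (induced_comonad adjFU b)))
  (HOmtlax : lax_morphism Q (induced_comonad adjFU) G Omt)
  (HLt : exists Ltinv : forall c : Cc, hom (induced_comonad adjFU (V c)) (V (Q c)),
      (forall c : Cc, Ltinv c ∘ mateL adjVG Omt c = idn (V (Q c))) /\
      (forall c : Cc, mateL adjVG Omt c ∘ Ltinv c = idn (induced_comonad adjFU (V c))))
  (Hchi : forall b : B,
      distr_law adjFU Om Ominv b ∘ distr_law adjVG Omt Omtinv b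
        = idn (induced_comonad adjVG (induced_comonad adjFU b)) /\
      distr_law adjVG Omt Omtinv b ∘ distr_law adjFU Om Ominv b
        = idn (induced_comonad adjFU (induced_comonad adjVG b))) :
  forall (Z : Category) (N : Functor B Z),
  exists (f : { lam : NatTrans (fcomp N (induced_comonad adjVG))
                               (fcomp N (induced_comonad adjFU))
              | left_coalg (induced_comonad adjVG) (induced_comonad adjFU) (distr_law adjFU Om Ominv) lam }
              -> { nab : NatTrans (fcomp N V) (fcomp (fcomp N V) Q)
                 | opcoalg nab })
         (g : { nab : NatTrans (fcomp N V) (fcomp (fcomp N V) Q) | opcoalg nab }
              -> { lam : NatTrans (fcomp N (induced_comonad adjVG))
                                  (fcomp N (induced_comonad adjFU))
                 | left_coalg (induced_comonad adjVG) (induced_comonad adjFU) (distr_law adjFU Om Ominv) lam }),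
    (forall x, g (f x) = x) /\ (forall y, f (g y) = y).
Proof.
  destruct HLt as [Li [HLi1 HLi2]]. intros Z N.
  assert (LN : forall (c c' : Cc) (h : hom c c'), mateL adjVG Omt c' ∘ fmap V (fmap Q h) = fmap F (fmap U (fmap V h)) ∘ mateL adjVG Omt c).
  { intros. unfold mateL. rnorm.
    rwn2 V Q (adj_unit adjVG) h. rwn1 V Omt (fmap V h).
    rwn (adj_counit adjVG) (fmap F (fmap U (fmap V h))). reflexivity. }
  assert (Ldef : forall c, mateL adjVG Omt c = adj_counit adjVG (F (U (V c))) ∘ (fmap V (Omt (V c)) ∘ fmap V (fmap Q (adj_unit adjVG c)))).
  { intros. unfold mateL. rnorm. reflexivity. }
  assert (CU : forall c, adj_counit adjFU (V c) ∘ mateL adjVG Omt c = fmap V (ceps Q c)).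
  { intros. rewrite Ldef. rnorm.
    rwnr (adj_counit adjVG) (adj_counit adjFU (V c)).
    pose proof (proj2 HOmtlax (V c)) as K. simpl in K. liftH V K. rw K. clear K.
    rwn1 V (ceps Q) (adj_unit adjVG c).
    rw (tri_l adjVG c). reflexivity. }
  assert (CD : forall c, fmap F (adj_unit adjFU (U (V c))) ∘ mateL adjVG Omt c
      = fmap F (fmap U (mateL adjVG Omt c)) ∘ (mateL adjVG Omt (Q c) ∘ fmap V (cdelta Q c))).
  { intros. rewrite !Ldef. rnorm.
    rwnr (adj_counit adjVG) (fmap F (adj_unit adjFU (U (V c)))).
    pose proof (proj1 HOmtlax (V c)) as K. simpl in K. liftH V K. rw K. clear K.
    rwn1 V (cdelta Q) (adj_unit adjVG c).
    rwnr (adj_counit adjVG) (fmap F (fmap U (fmap V (fmap Q (adj_unit adjVG c))))).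
    rwnr (adj_counit adjVG) (fmap F (fmap U (fmap V (Omt (V c))))).
    rwnr (adj_counit adjVG) (fmap F (fmap U (adj_counit adjVG (F (U (V c)))))).
    rwnr1 V Omt (fmap V (fmap Q (adj_unit adjVG c))).
    rwnr1 V Omt (fmap V (Omt (V c))).
    rwnr1 V Omt (adj_counit adjVG (F (U (V c)))).
    rwnr2 V Q (adj_unit adjVG) (fmap Q (adj_unit adjVG c)).
    rwnr2 V Q (adj_unit adjVG) (Omt (V c)).
    pose proof (tri_r adjVG (F (U (V c)))) as K. liftH Q K. liftH V K. rw K. clear K.
    reflexivity. }
  assert (E : forall b, fmap F (fmap U (adj_counit adjVG b)) ∘ mateL adjVG Omt (G b) = adj_counit adjVG (F (U b)) ∘ fmap V (Omt b)).
  { intros. rewrite Ldef. rnorm.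
    rwnr (adj_counit adjVG) (fmap F (fmap U (adj_counit adjVG b))).
    rwnr1 V Omt (adj_counit adjVG b).
    pose proof (tri_r adjVG b) as K. liftH Q K. liftH V K. rw K. clear K. reflexivity. }
  assert (LiN : forall (c c' : Cc) (h : hom c c'), Li c' ∘ fmap F (fmap U (fmap V h)) = fmap V (fmap Q h) ∘ Li c).
  { intros. apply (cancel_l (mateL adjVG Omt c') (Li c')); [apply HLi1|].
    rw (HLi2 c'). rw (LN c c' h). rw (HLi2 c). reflexivity. }
  assert (CUi : forall c, fmap V (ceps Q c) ∘ Li c = adj_counit adjFU (V c)).
  { intros. rewrite <- CU. rw (HLi2 c). reflexivity. }
  assert (X1 : forall b, distr_law adjFU Om Ominv b ∘ mateL adjVG Omt (G b) = fmap V (Omt b)).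
  { intros. apply (cancel_r (fmap V (Omtinv b)) (fmap V (Omt b))).
    - pose proof (HOmt1 b) as K. liftH V K. exact K.
    - pose proof (HOmt2 b) as K. liftH V K. rw K.
      pose proof (proj1 (Hchi b)) as K2. unfold distr_law at 2 in K2. rw K2. reflexivity. }
  assert (X2 : forall c, distr_law adjFU Om Ominv (V c) ∘ fmap F (fmap U (fmap V (adj_unit adjVG c)))
     = fmap V (Omt (V c)) ∘ (fmap V (fmap Q (adj_unit adjVG c)) ∘ Li c)).
  { intros. apply (cancel_l (distr_law adjVG Omt Omtinv (V c)) (distr_law adjFU Om Ominv (V c))).
    - exact (proj1 (Hchi (V c))).
    - pose proof (proj2 (Hchi (V c))) as K2. rw K2.
      unfold distr_law at 1. rnorm.
      pose proof (HOmt1 (V c)) as K. liftH V K. rw K.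
      rw (LN _ _ (adj_unit adjVG c)). rw (HLi2 c). reflexivity. }
  set (L := mateL adjVG Omt) in *. clear Hchi.
  set (chi := distr_law adjFU Om Ominv) in *.
  clearbody L chi. clear HOm1 HOm2 HOmlax.
  pose (lamf := fun (nab : NatTrans (fcomp N V) (fcomp (fcomp N V) Q)) => (fun (b : B) =>
     fmap N (fmap F (fmap U (adj_counit adjVG b))) ∘ (fmap N (L (G b)) ∘ nab (G b)))
     : forall b, hom (fcomp N (induced_comonad adjVG) b) (fcomp N (induced_comonad adjFU) b)).
  assert (lamN : forall nab (b b' : B) (h : hom b b'), lamf nab b' ∘ fmap (fcomp N (induced_comonad adjVG)) h = fmap (fcomp N (induced_comonad adjFU)) h ∘ lamf nab b).
  { intros. unfold lamf. rnorm. rwn nab (fmap G h).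
    pose proof (LN _ _ (fmap G h)) as K; liftH N K; rw K; clear K.
    rwn3 N F U (adj_counit adjVG) h. reflexivity. }
  pose (mkL := fun nab => ({| tr := lamf nab; natural := lamN nab |} : NatTrans (fcomp N (induced_comonad adjVG)) (fcomp N (induced_comonad adjFU)))).
  pose (nabf := fun (lam : NatTrans (fcomp N (induced_comonad adjVG)) (fcomp N (induced_comonad adjFU))) => (fun (c : Cc) =>
     fmap N (Li c) ∘ (lam (V c) ∘ fmap N (fmap V (adj_unit adjVG c))))
     : forall c, hom (fcomp N V c) (fcomp (fcomp N V) Q c)).
  assert (nabN : forall lam c c' (h : hom c c'), nabf lam c' ∘ fmap (fcomp N V) h = fmap (fcomp (fcomp N V) Q) h ∘ nabf lam c).
  { intros. unfold nabf. rnorm. rwn2 N V (adj_unit adjVG) h. rwn lam (fmap V h).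
    pose proof (LiN _ _ h) as K; liftH N K; rw K; clear K. reflexivity. }
  pose (mkN := fun lam => ({| tr := nabf lam; natural := nabN lam |} : NatTrans (fcomp N V) (fcomp (fcomp N V) Q))).
  assert (A1 : forall nab : NatTrans (fcomp N V) (fcomp (fcomp N V) Q), opcoalg nab -> left_coalg (induced_comonad adjVG) (induced_comonad adjFU) chi (mkL nab)).
  { intros nab [Hd He]. unfold left_coalg. split.
    - intros b. unfold mkL, lamf. simpl. rnorm.
      rwn2 N F (adj_unit adjFU) (fmap U (adj_counit adjVG b)).
      pose proof (CD (G b)) as K; liftH N K; rw K; clear K.
      pose proof (Hd (G b)) as K; simpl in K; rw K; clear K.
      rwn nab (adj_unit adjVG (G b)).
      pose proof (LN _ _ (adj_unit adjVG (G b))) as K; liftH N K; rw K; clear K.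
      pose proof (tri_l adjVG (G b)) as K; liftH U K; liftH F K; liftH N K; rw K; clear K.
      pose proof (X1 b) as K; liftH N K; rw K; clear K.
      rwn nab (Omt b).
      pose proof (LN _ _ (Omt b)) as K; liftH N K; rw K; clear K.
      pose proof (E b) as K; liftH U K; liftH F K; liftH N K; rw K; clear K.
      reflexivity.
    - intros b. unfold mkL, lamf. simpl. rnorm.
      rwn1 N (adj_counit adjFU) (adj_counit adjVG b).
      pose proof (CU (G b)) as K; liftH N K; rw K; clear K.
      pose proof (He (G b)) as K; simpl in K; rw K; clear K.
      reflexivity. }
  assert (B1 : forall lam : NatTrans (fcomp N (induced_comonad adjVG)) (fcomp N (induced_comonad adjFU)), left_coalg (induced_comonad adjVG) (induced_comonad adjFU) chi lam -> opcoalg (mkN lam)).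
  { intros lam [Hd He]. unfold opcoalg. split.
    - intros c. unfold mkN, nabf. simpl.
      apply (cancel_l (fmap N (fmap F (fmap U (L c))) ∘ fmap N (L (Q c))) (fmap N (Li (Q c)) ∘ fmap N (fmap F (fmap U (Li c))))).
      + rnorm. pose proof (HLi1 c) as K; liftH U K; liftH F K; liftH N K; rw K; clear K.
        pose proof (HLi1 (Q c)) as K; liftH N K; rw K; clear K. reflexivity.
      + assert (KK : lam (F (U (V c))) ∘ (fmap N (fmap V (Omt (V c))) ∘ fmap N (fmap V (fmap Q (adj_unit adjVG c)))) = fmap N (fmap F (fmap U (L c))) ∘ (lam (V (Q c)) ∘ fmap N (fmap V (adj_unit adjVG (Q c))))).
        { rewrite (Ldef c). rnorm.
          rwnr lam (fmap V (fmap Q (adj_unit adjVG c))).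
          rwnr lam (fmap V (Omt (V c))).
          rwnr lam (adj_counit adjVG (F (U (V c)))).
          rwnr2 N V (adj_unit adjVG) (fmap Q (adj_unit adjVG c)).
          rwnr2 N V (adj_unit adjVG) (Omt (V c)).
          pose proof (tri_r adjVG (F (U (V c)))) as K; liftH V K; liftH N K; rw K; clear K.
          reflexivity. }
        rnorm.
        pose proof (CD c) as K; liftH N K; rwr K; clear K.
        pose proof (HLi2 c) as K; liftH N K; rw K; clear K.
        pose proof (Hd (V c)) as K; simpl in K; rw K; clear K.
        rwn2 N V (adj_unit adjVG) (adj_unit adjVG c).
        rwn lam (fmap V (adj_unit adjVG c)).
        pose proof (X2 c) as K; liftH N K; rw K; clear K.
        rw KK.
        pose proof (HLi2 (Q c)) as K; liftH N K; rw K; clear K.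
        reflexivity.
    - intros c. unfold mkN, nabf. simpl. rnorm.
      pose proof (CUi c) as K; liftH N K; rw K; clear K.
      pose proof (He (V c)) as K; simpl in K; rw K; clear K.
      pose proof (tri_l adjVG c) as K; liftH N K; rw K; clear K.
      reflexivity. }
  exists (fun y => exist _ (mkN (proj1_sig y)) (B1 _ (proj2_sig y))).
  exists (fun x => exist _ (mkL (proj1_sig x)) (A1 _ (proj2_sig x))).
  split.
  - intros [lam Hl]. apply sig_nat_eq. intros c. simpl. unfold mkN, mkL, nabf, lamf. simpl. rnorm.
    pose proof (HLi2 (G c)) as K; liftH N K; rw K; clear K.
    rwnr lam (adj_counit adjVG c).
    pose proof (tri_r adjVG c) as K; liftH V K; liftH N K; rw K; clear K. reflexivity.
  - intros [nab Hn]. apply sig_nat_eq. intros b. simpl. unfold mkN, mkL, nabf, lamf. simpl. rnorm.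
    rwn nab (adj_unit adjVG b).
    pose proof (LN _ _ (adj_unit adjVG b)) as K; liftH N K; rw K; clear K.
    pose proof (tri_l adjVG b) as K; liftH U K; liftH F K; liftH N K; rw K; clear K.
    pose proof (HLi1 b) as K; liftH N K; rw K; clear K. reflexivity.
Qed.
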